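(* Let $(A,\cdot,[\cdot,\cdot],\alpha)$ be a Hom-Poisson algebra with $\alpha$ invertible, and let $\omega\in\wedge^2A^*$ be nondegenerate (i.e. $\omega^\sharp:A\to A^*$, $\langle\omega^\sharp(x),y\rangle=\omega(x,y)$, is invertible) such that for all $x,y,z\in A$: $\omega(x\cdot y,\alpha(z))+\omega(y\cdot z,\alpha(x))+\omega(z\cdot x,\alpha(y))=0$, $\omega([x,y],\alpha(z))+\omega([y,z],\alpha(x))+\omega([z,x],\alpha(y))=0$, and $\omega(x,y)=\omega(\alpha(x),\alpha(y))$. Then there is a compatible Hom-pre-Poisson algebra structure $(A,\diamond,*,\alpha)$ on $A$ determined by $\omega(x\diamond y,z)=\omega(y,\alpha^{-1}(x)\cdot\alpha^{-2}(z))$ and $\omega(x*y,z)=-\omega(y,[\alpha^{-1}(x),\alpha^{-2}(z)])$ for all $x,y,z\in A$.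
   Context: A Hom-Poisson algebra $(A,\cdot,[\cdot,\cdot],\alpha)$: $(A,\cdot,\alpha)$ commutative Hom-associative (commutative product, $\alpha$ multiplicative, $\alpha(x)\cdot(y\cdot z)=(x\cdot y)\cdot\alpha(z)$), $(A,[\cdot,\cdot],\alpha)$ Hom-Lie (skew bracket, $\alpha$ multiplicative, $[\alpha x,[y,z]]+[\alpha y,[z,x]]+[\alpha z,[x,y]]=0$), and $[\alpha(x),y\cdot z]=[x,y]\cdot\alpha(z)+\alpha(y)\cdot[x,z]$. A Hom-pre-Poisson algebra $(A,\diamond,*,\alpha)$: $\alpha$ multiplicative for both products, $\alpha(x)\diamond(y\diamond z)=(x\diamond y)\diamond\alpha(z)+(y\diamond x)\diamond\alpha(z)$, $(x*y)*\alpha(z)-\alpha(x)*(y*z)=(y*x)*\alpha(z)-\alpha(y)*(x*z)$, $(x*y-y*x)\diamond\alpha(z)=\alpha(x)*(y\diamond z)-\alpha(y)\diamond(x*z)$, $(x\diamond y+y\diamond x)*\alpha(z)=\alpha(x)\diamond(y*z)+\alpha(y)\diamond(x*z)$. It is compatible with $(A,\cdot,[\cdot,\cdot],\alpha)$ if $x\cdot y=x\diamond y+y\diamond x$ and $[x,y]=x*y-y*x$. *)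

(* Defs.v *)
From mathcomp Require Import all_boot all_order all_algebra.
Set Implicit Arguments. Unset Strict Implicit. Unset Printing Implicit Defensive.
Import GRing.Theory.
Local Open Scope ring_scope.

Section HomDefs.
Variables (K : fieldType) (A : lmodType K).

Definition lin_map (f : A -> A) : Prop :=
  forall (a : K) (x y : A), f (a *: x + y) = a *: f x + f y.

Definition bilin_prod (m : A -> A -> A) : Prop :=
  (forall (a : K) (x y z : A), m (a *: x + y) z = a *: m x z + m y z) /\
  (forall (a : K) (x y z : A), m z (a *: x + y) = a *: m z x + m z y).

Definition bilin_form (w : A -> A -> K) : Prop :=
  (forall (a : K) (x y z : A), w (a *: x + y) z = a * w x z + w y z) /\
  (forall (a : K) (x y z : A), w z (a *: x + y) = a * w z x + w z y).

Definition lin_functional (f : A -> K) : Prop :=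
  forall (a : K) (x y : A), f (a *: x + y) = a * f x + f y.

Definition hp_two_form (w : A -> A -> K) : Prop :=
  bilin_form w /\ forall x, w x x = 0.

(** hp_nondegenerate: omega^sharp : A -> A^*, x |-> omega(x, .), is bijective
    onto the linear functionals on A *)
Definition hp_nondegenerate (w : A -> A -> K) : Prop :=
  forall f : A -> K, lin_functional f ->
    exists! x : A, forall y, w x y = f y.

Definition multiplicative (alpha : A -> A) (m : A -> A -> A) : Prop :=
  forall x y, alpha (m x y) = m (alpha x) (alpha y).

Definition hom_poisson (mul br : A -> A -> A) (alpha : A -> A) : Prop :=
  lin_map alpha /\ bilin_prod mul /\ bilin_prod br /\
      (forall x y, mul x y = mul y x) /\
      multiplicative alpha mul /\
      (forall x y z, mul (alpha x) (mul y z) = mul (mul x y) (alpha z)) /\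
      (forall x y, br x y = - br y x) /\
      multiplicative alpha br /\
      (forall x y z, br (alpha x) (br y z) + br (alpha y) (br z x)
                     + br (alpha z) (br x y) = 0) /\
      (forall x y z, br (alpha x) (mul y z)
                     = mul (br x y) (alpha z) + mul (alpha y) (br x z)).

Definition hom_pre_poisson (dm st : A -> A -> A) (alpha : A -> A) : Prop :=
  lin_map alpha /\ bilin_prod dm /\ bilin_prod st /\
      multiplicative alpha dm /\ multiplicative alpha st /\
      (forall x y z, dm (alpha x) (dm y z)
                     = dm (dm x y) (alpha z) + dm (dm y x) (alpha z)) /\
      (forall x y z, st (st x y) (alpha z) - st (alpha x) (st y z)
                     = st (st y x) (alpha z) - st (alpha y) (st x z)) /\
      (forall x y z, dm (st x y - st y x) (alpha z)
                     = st (alpha x) (dm y z) - dm (alpha y) (st x z)) /\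
      (forall x y z, st (dm x y + dm y x) (alpha z)
                     = dm (alpha x) (st y z) + dm (alpha y) (st x z)).

Definition compatible_pre (dm st mul br : A -> A -> A) : Prop :=
  (forall x y, mul x y = dm x y + dm y x) /\
  (forall x y, br x y = st x y - st y x).

End HomDefs.

(* Main.v *)
Require Import Defs.
From mathcomp Require Import all_boot all_order all_algebra.
From mathcomp Require Import ring.
From Stdlib Require Import IndefiniteDescription.
Set Implicit Arguments. Unset Strict Implicit.
Import GRing.Theory.
Local Open Scope ring_scope.

Lemma by_hyp (K : fieldType) (L R G1 G2 c : K) :
  L = R -> G1 - G2 = c * (L - R) -> G1 = G2.
Proof. by move=> -> h; apply/eqP; rewrite -subr_eq0 h subrr mulr0. Qed.

Lemma bp_L0 (K : fieldType) (A : lmodType K) (m : A -> A -> A) :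
  bilin_prod m -> forall z, m 0 z = 0.
Proof.
case=> hL _ z; have h := hL 1 0 0 z; rewrite scale1r addr0 scale1r in h.
by apply: (addrI (m 0 z)); rewrite addr0 -h.
Qed.

Lemma bp_R0 (K : fieldType) (A : lmodType K) (m : A -> A -> A) :
  bilin_prod m -> forall z, m z 0 = 0.
Proof.
case=> _ hR z; have h := hR 1 0 0 z; rewrite scale1r addr0 scale1r in h.
by apply: (addrI (m z 0)); rewrite addr0 -h.
Qed.

Lemma bp_LD (K : fieldType) (A : lmodType K) (m : A -> A -> A) :
  bilin_prod m -> forall x y z, m (x + y) z = m x z + m y z.
Proof. by case=> hL _ x y z; have := hL 1 x y z; rewrite !scale1r. Qed.

Lemma bp_RD (K : fieldType) (A : lmodType K) (m : A -> A -> A) :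
  bilin_prod m -> forall x y z, m z (x + y) = m z x + m z y.
Proof. by case=> _ hR x y z; have := hR 1 x y z; rewrite !scale1r. Qed.

Lemma bp_LN (K : fieldType) (A : lmodType K) (m : A -> A -> A) :
  bilin_prod m -> forall x z, m (- x) z = - m x z.
Proof.
move=> H x z; have := H.1 (-1) x 0 z.
by rewrite addr0 (bp_L0 H) addr0 !scaleN1r.
Qed.

Lemma bp_RN (K : fieldType) (A : lmodType K) (m : A -> A -> A) :
  bilin_prod m -> forall x z, m z (- x) = - m z x.
Proof.
move=> H x z; have := H.2 (-1) x 0 z.
by rewrite addr0 (bp_R0 H) addr0 !scaleN1r.
Qed.

Lemma bf_L0 (K : fieldType) (A : lmodType K) (w : A -> A -> K) :
  bilin_form w -> forall z, w 0 z = 0.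
Proof.
case=> hL _ z; have h := hL 1 0 0 z; rewrite scale1r addr0 mul1r in h.
by apply: (addrI (w 0 z)); rewrite addr0 -h.
Qed.

Lemma bf_R0 (K : fieldType) (A : lmodType K) (w : A -> A -> K) :
  bilin_form w -> forall z, w z 0 = 0.
Proof.
case=> _ hR z; have h := hR 1 0 0 z; rewrite scale1r addr0 mul1r in h.
by apply: (addrI (w z 0)); rewrite addr0 -h.
Qed.

Lemma bf_LD (K : fieldType) (A : lmodType K) (w : A -> A -> K) :
  bilin_form w -> forall x y z, w (x + y) z = w x z + w y z.
Proof. by case=> hL _ x y z; have := hL 1 x y z; rewrite scale1r mul1r. Qed.

Lemma bf_RD (K : fieldType) (A : lmodType K) (w : A -> A -> K) :
  bilin_form w -> forall x y z, w z (x + y) = w z x + w z y.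
Proof. by case=> _ hR x y z; have := hR 1 x y z; rewrite scale1r mul1r. Qed.

Lemma bf_LZ (K : fieldType) (A : lmodType K) (w : A -> A -> K) :
  bilin_form w -> forall a x z, w (a *: x) z = a * w x z.
Proof. by move=> H a x z; have := H.1 a x 0 z; rewrite addr0 (bf_L0 H) addr0. Qed.

Lemma bf_RZ (K : fieldType) (A : lmodType K) (w : A -> A -> K) :
  bilin_form w -> forall a x z, w z (a *: x) = a * w z x.
Proof. by move=> H a x z; have := H.2 a x 0 z; rewrite addr0 (bf_R0 H) addr0. Qed.

Lemma bf_LN (K : fieldType) (A : lmodType K) (w : A -> A -> K) :
  bilin_form w -> forall x z, w (- x) z = - w x z.
Proof. by move=> H x z; rewrite -scaleN1r (bf_LZ H) mulN1r. Qed.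

Lemma bf_RN (K : fieldType) (A : lmodType K) (w : A -> A -> K) :
  bilin_form w -> forall x z, w z (- x) = - w z x.
Proof. by move=> H x z; rewrite -scaleN1r (bf_RZ H) mulN1r. Qed.

Lemma bf_LB (K : fieldType) (A : lmodType K) (w : A -> A -> K) :
  bilin_form w -> forall x y z, w (x - y) z = w x z - w y z.
Proof. by move=> H x y z; rewrite (bf_LD H) (bf_LN H). Qed.

Theorem theorem5p10 (K : fieldType) (A : lmodType K)
    (mul br : A -> A -> A) (alpha alpha_inv : A -> A)
    (w : A -> A -> K) :
  hom_poisson mul br alpha ->
  cancel alpha alpha_inv -> cancel alpha_inv alpha ->
  hp_two_form w -> hp_nondegenerate w ->
  (forall x y z, w (mul x y) (alpha z) + w (mul y z) (alpha x)
                 + w (mul z x) (alpha y) = 0) ->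
  (forall x y z, w (br x y) (alpha z) + w (br y z) (alpha x)
                 + w (br z x) (alpha y) = 0) ->
  (forall x y, w x y = w (alpha x) (alpha y)) ->
  exists dm st : A -> A -> A,
    [/\ (forall x y z,
           w (dm x y) z = w y (mul (alpha_inv x) (alpha_inv (alpha_inv z)))),
        (forall x y z,
           w (st x y) z = - w y (br (alpha_inv x) (alpha_inv (alpha_inv z)))),
        hom_pre_poisson dm st alpha &
        compatible_pre dm st mul br].
Proof.
move=> HP c1 c2 [Wb walt] Hnd Hcm Hcb Hwa.
have HP' := HP.
case: HP' => alin [Mb [Bb [mulC [amul [massoc [brS [abr [jac leib]]]]]]]].
set b := alpha_inv.
have wDl := bf_LD Wb; have wDr := bf_RD Wb; have wZl := bf_LZ Wb.
have wZr := bf_RZ Wb; have wNl := bf_LN Wb; have wNr := bf_RN Wb.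
have wBl := bf_LB Wb; have w0r := bf_R0 Wb.
have mLN := bp_LN Mb; have mRN := bp_RN Mb; have mLD := bp_LD Mb.
have bRN := bp_RN Bb; have bLN := bp_LN Bb; have bLD := bp_LD Bb.
have wskew : forall u v, w u v = - w v u.
  move=> u v; have := walt (u + v); rewrite wDl !wDr !walt add0r addr0 => h.
  by apply/eqP; rewrite -addr_eq0 h.
have ab : forall u, alpha (b u) = u by [].
have ba : forall u, b (alpha u) = u by [].
have blin : forall a x y, b (a *: x + y) = a *: b x + b y.
  by move=> a x y; apply: (can_inj c1); rewrite alin !ab.
have bmul : forall x y, b (mul x y) = mul (b x) (b y).
  by move=> x y; apply: (can_inj c1); rewrite amul !ab.
have bbr : forall x y, b (br x y) = br (b x) (b y).
  by move=> x y; apply: (can_inj c1); rewrite abr !ab.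
have wab : forall u v, w (alpha u) v = w u (b v).
  by move=> u v; rewrite [RHS]Hwa ab.
have wuniq : forall u v, (forall z, w u z = w v z) -> u = v.
  move=> u v H.
  have [x [_ ux]] := Hnd (w v) (fun a s t => Wb.2 a s t v).
  by rewrite -(ux u H) -(ux v (fun _ => erefl)).
have exdm : forall x y, {u | forall z, w u z = w y (mul (b x) (b (b z)))}.
  move=> x y; apply: constructive_indefinite_description.
  have [|u [Hu _]] := Hnd (fun z => w y (mul (b x) (b (b z)))); last by exists u.
  by move=> a s t /=; rewrite !blin Mb.2 Wb.2.
have exst : forall x y, {u | forall z, w u z = - w y (br (b x) (b (b z)))}.
  move=> x y; apply: constructive_indefinite_description.
  have [|u [Hu _]] := Hnd (fun z => - w y (br (b x) (b (b z)))); last by exists u.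
  by move=> a s t /=; rewrite !blin Bb.2 Wb.2 opprD mulrN.
pose dm x y := proj1_sig (exdm x y).
pose st x y := proj1_sig (exst x y).
have Hdm : forall x y z, w (dm x y) z = w y (mul (b x) (b (b z))).
  by move=> x y; exact: (proj2_sig (exdm x y)).
have Hst : forall x y z, w (st x y) z = - w y (br (b x) (b (b z))).
  by move=> x y; exact: (proj2_sig (exst x y)).
clearbody dm st.
have cmul : forall x y, mul x y = dm x y + dm y x.
  move=> x y; apply: wuniq => z; rewrite wDl !Hdm.
  have h := Hcm x y (b z); rewrite ab in h.
  have e1 : w (mul y (b z)) (alpha x) = - w x (mul (b y) (b (b z))).
    by rewrite wskew wab bmul.
  have e2 : w (mul (b z) x) (alpha y) = - w y (mul (b x) (b (b z))).
    by rewrite wskew wab bmul [mul (b (b z)) _]mulC.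
  rewrite e1 e2 in h; apply: (by_hyp (c := 1) h); ring.
have cbr : forall x y, br x y = st x y - st y x.
  move=> x y; apply: wuniq => z; rewrite wBl !Hst.
  have h := Hcb x y (b z); rewrite ab in h.
  have e1 : w (br y (b z)) (alpha x) = - w x (br (b y) (b (b z))).
    by rewrite wskew wab bbr.
  have e2 : w (br (b z) x) (alpha y) = w y (br (b x) (b (b z))).
    by rewrite wskew wab bbr [br (b (b z)) _]brS wNr opprK.
  rewrite e1 e2 in h; apply: (by_hyp (c := 1) h); ring.
exists dm, st; split => //.
have dmb : bilin_prod dm.
  split=> a x y z; apply: wuniq => t; rewrite wDl wZl !Hdm.
    by rewrite blin Mb.1 wDr wZr.
  by rewrite wDl wZl.
have stb : bilin_prod st.
  split=> a x y z; apply: wuniq => t; rewrite wDl wZl !Hst.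
    by rewrite blin Bb.1 wDr wZr; ring.
  by rewrite wDl wZl; ring.
have dmD := bp_LD dmb; have stD := bp_LD stb; have stN := bp_LN stb.
split => //; split => //; split => //; split.
  move=> x y; apply: wuniq => z; rewrite wab !Hdm wab ba bmul //.
split.
  move=> x y; apply: wuniq => z; rewrite wab !Hst wab ba bbr //.
split.
  move=> x y z; rewrite -dmD -cmul; apply: wuniq => t; rewrite !Hdm.
  rewrite ba wab !bmul; congr (w z _).
  have := massoc (b (b y)) (b (b x)) (b (b (b (b t)))); rewrite !ab => ->.
  by rewrite [mul (b (b y)) _]mulC.
split.
  have key : forall x y z, st (br x y) (alpha z)
      = st (alpha x) (st y z) - st (alpha y) (st x z).
    move=> x y z; apply: wuniq => t; rewrite wBl !Hst !ba wab !bbr ?wNl.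
    have h := congr1 (w z) (jac (b (b x)) (b (b y)) (b (b (b (b t))))).
    rewrite !ab !wDr w0r [br (b (b (b (b t)))) _]brS [br (b (b (b t))) _]brS
      !bRN !wNr in h.
    apply: (by_hyp (c := 1) h); ring.
  move=> x y z; apply: wuniq => t.
  have h := congr1 (fun u => w u t) (key x y z).
  rewrite /= cbr stD stN !wDl !wNl in h.
  rewrite !wBl; apply: (by_hyp (c := 1) h); ring.
split.
  move=> x y z; rewrite -cbr; apply: wuniq => t.
  rewrite wBl !Hdm !Hst !Hdm !ba wab !bmul !bbr.
  have h := congr1 (w z) (leib (b (b x)) (b (b y)) (b (b (b (b t))))).
  rewrite !ab wDr in h.
  rewrite h; ring.
move=> x y z; rewrite -cmul; apply: wuniq => t.
rewrite wDl !Hst !Hdm !Hst !ba wab !bmul !bbr !bmul.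
have h1 := congr1 (w z) (leib (b (b y)) (b (b x)) (b (b (b (b t))))).
rewrite !ab wDr [br (b (b y)) (b (b x))]brS mLN wNr in h1.
have h2 := congr1 (w z) (leib (b (b x)) (b (b y)) (b (b (b (b t))))).
rewrite !ab wDr in h2.
have h3 := congr1 (w z) (leib (b (b (b (b t)))) (b (b x)) (b (b y))).
rewrite !ab wDr [mul (br _ _) (b y)]mulC [br (b (b (b (b t)))) _]brS
  [br (b (b (b (b t)))) _]brS !mRN !wNr in h3.
rewrite h1 h2 [br (mul _ _) _]brS wNr h3; ring.
Qed.
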